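(* Let $\mathbf{Y}\sim\mathcal{SUT}_{d,m}(\boldsymbol{\xi},\boldsymbol{\Omega},\boldsymbol{\Delta},\boldsymbol{\tau},\bar{\boldsymbol{\Gamma}},\nu)$ with $d=d_1+d_2$, $d_1,d_2\ge1$, partitioned as $\mathbf{Y}=(\mathbf{Y}_1^\top,\mathbf{Y}_2^\top)^\top$, $\boldsymbol{\xi}=(\boldsymbol{\xi}_1^\top,\boldsymbol{\xi}_2^\top)^\top$, $\boldsymbol{\Omega}=(\boldsymbol{\Omega}_{ij})_{i,j=1,2}$, $\boldsymbol{\Delta}=(\boldsymbol{\Delta}_1^\top,\boldsymbol{\Delta}_2^\top)^\top$, with $\mathbf{Y}_i,\boldsymbol{\xi}_i\in\mathbb{R}^{d_i}$, $\boldsymbol{\Omega}_{ij}\in\mathbb{R}^{d_i\times d_j}$, $\boldsymbol{\Delta}_i\in\mathbb{R}^{d_i\times m}$; let $\boldsymbol{\omega}_i=\mathrm{diag}(\boldsymbol{\Omega}_{ii})^{1/2}$ and $\bar{\boldsymbol{\Omega}}_{ij}=\boldsymbol{\omega}_i^{-1}\boldsymbol{\Omega}_{ij}\boldsymbol{\omega}_j^{-1}$. Then the conditional distribution of $\mathbf{Y}_2$ given $\mathbf{Y}_1>\mathbf{0}$ (componentwise) is $$(\mathbf{Y}_2\mid\mathbf{Y}_1>\mathbf{0})\sim\mathcal{SUT}_{d_2,d_1+m}(\boldsymbol{\xi}_2,\boldsymbol{\Omega}_{22},\boldsymbol{\Delta}_{2\neg1},\boldsymbol{\tau}_{2\neg1},\bar{\boldsymbol{\Gamma}}_{2\neg1},\nu),$$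 where $\boldsymbol{\Delta}_{2\neg1}=\begin{pmatrix}\boldsymbol{\Delta}_2&\bar{\boldsymbol{\Omega}}_{21}\end{pmatrix}$, $\bar{\boldsymbol{\Gamma}}_{2\neg1}=\begin{pmatrix}\bar{\boldsymbol{\Gamma}}&\boldsymbol{\Delta}_1^\top\\ \boldsymbol{\Delta}_1&\bar{\boldsymbol{\Omega}}_{11}\end{pmatrix}$, and $\boldsymbol{\tau}_{2\neg1}=\begin{pmatrix}\boldsymbol{\tau}\\ \boldsymbol{\omega}_1^{-1}\boldsymbol{\xi}_1\end{pmatrix}$.
   Context: Notation: $\mathcal{T}_k(\boldsymbol{\mu},\boldsymbol{\Sigma},\nu)$ is the $k$-dimensional Student $t$ distribution with location $\boldsymbol{\mu}$, dispersion $\boldsymbol{\Sigma}$ and $\nu>0$ degrees of freedom. For dimension $p$ and latent dimension $q$: parameters are $\boldsymbol{\xi}\in\mathbb{R}^p$; $\boldsymbol{\Omega}$ a $p\times p$ positive definite matrix, $\boldsymbol{\omega}=\mathrm{diag}(\boldsymbol{\Omega})^{1/2}$, $\bar{\boldsymbol{\Omega}}=\boldsymbol{\omega}^{-1}\boldsymbol{\Omega}\boldsymbol{\omega}^{-1}$; $\boldsymbol{\Delta}$ a $p\times q$ matrix; $\bar{\boldsymbol{\Gamma}}$ a $q\times q$ correlation matrix; $\boldsymbol{\tau}\in\mathbb{R}^q$; $\nu>0$; with $\bar{\boldsymbol{\Omega}}^*=\begin{pmatrix}\bar{\boldsymbol{\Gamma}}&\boldsymbol{\Delta}^\top\\ \boldsymbol{\Delta}&\bar{\boldsymbol{\Omega}}\end{pmatrix}$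 positive definite. If $(\mathbf{U}_0^\top,\mathbf{U}_1^\top)^\top\sim\mathcal{T}_{q+p}(\mathbf{0},\bar{\boldsymbol{\Omega}}^*,\nu)$ ($\mathbf{U}_0\in\mathbb{R}^q$, $\mathbf{U}_1\in\mathbb{R}^p$) and $\mathbf{Z}$ has the conditional distribution of $\mathbf{U}_1$ given $\mathbf{U}_0+\boldsymbol{\tau}>\mathbf{0}$ (componentwise), then $\mathbf{Y}=\boldsymbol{\xi}+\boldsymbol{\omega}\mathbf{Z}$ has distribution $\mathcal{SUT}_{p,q}(\boldsymbol{\xi},\boldsymbol{\Omega},\boldsymbol{\Delta},\boldsymbol{\tau},\bar{\boldsymbol{\Gamma}},\nu)$. *)

(* Defs.v *)
From HB Require Import structures.
From mathcomp Require Import all_boot all_order all_algebra.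
From mathcomp Require Import all_classical all_reals all_analysis.

Set Implicit Arguments.
Unset Strict Implicit.
Unset Printing Implicit Defensive.

Import Order.TTheory GRing.Theory Num.Theory.
Local Open Scope ring_scope.
Local Open Scope classical_set_scope.

Section SUT.
Variable R : realType.

(* coordinates: the measurable space R^k is k.-tuple R (product = Borel sigma-algebra) *)
Definition tcol (k : nat) (t : k.-tuple R) : 'cV[R]_k := \col_i tnth t i.
Definition coltup (k : nat) (v : 'cV[R]_k) : k.-tuple R := [tuple v i 0 | i < k].

(* Lebesgue integral over R^k of a nonnegative function, as the iterated
   integral against the one-dimensional Lebesgue measure (Tonelli). *)
Fixpoint lebint (k : nat) : (k.-tuple R -> \bar R) -> \bar R :=
  match k return (k.-tuple R -> \bar R) -> \bar R with
  | 0 => fun f => f [tuple]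
  | k'.+1 => fun f =>
      (\int[@lebesgue_measure R]_x lebint (fun v : k'.-tuple R => f (cons_tuple x v)))%E
  end.

Definition posdef (k : nat) (A : 'M[R]_k) : Prop :=
  A^T = A /\ forall x : 'cV[R]_k, x != 0 -> 0 < (x^T *m A *m x) 0 0.

Definition psd (k : nat) (A : 'M[R]_k) : Prop :=
  A^T = A /\ forall x : 'cV[R]_k, 0 <= (x^T *m A *m x) 0 0.

Definition correlation (k : nat) (A : 'M[R]_k) : Prop :=
  psd A /\ forall i, A i i = 1.

Definition dsqrt (k : nat) (A : 'M[R]_k) : 'M[R]_k :=
  diag_mx (\row_i Num.sqrt (A i i)).

Definition corrmx (k : nat) (A : 'M[R]_k) : 'M[R]_k :=
  invmx (dsqrt A) *m A *m invmx (dsqrt A).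

(* Kernel of the k-dimensional Student t density T_k(0, Sigma, nu):
   the density is c * tkernel with c a normalising constant. *)
Definition tkernel (k : nat) (Sigma : 'M[R]_k) (nu : R) (x : 'cV[R]_k) : R :=
  powR (1 + (x^T *m invmx Sigma *m x) 0 0 / nu) (- ((nu + k%:R) / 2)).

(* Law of SUT_{p,q}(xi, Omega, Delta, tau, Gammab, nu): for A a set of R^p,
   P(xi + omega Z in A) where Z ~ (U1 | U0 + tau > 0),
   (U0, U1) ~ T_{q+p}(0, Omegabar*, nu).  Normalising constants cancel. *)
Definition SUT_law (p q : nat) (xi : 'cV[R]_p) (Omega : 'M[R]_p)
    (Delta : 'M[R]_(p, q)) (tau : 'cV[R]_q) (Gammab : 'M[R]_q) (nu : R)
    (A : set (p.-tuple R)) : R :=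
  let S : 'M[R]_(q + p) := block_mx Gammab Delta^T Delta (corrmx Omega) in
  let trunc (u : 'cV[R]_(q + p)) := forall i, 0 < (usubmx u + tau) i 0 in
  let E := [set t : (q + p).-tuple R | trunc (tcol t)] in
  let EA := [set t : (q + p).-tuple R | trunc (tcol t) /\
               A (coltup (xi + dsqrt Omega *m dsubmx (tcol t)))] in
  fine (lebint (fun t => (tkernel S nu (tcol t) * \1_EA t)%:E)) /
  fine (lebint (fun t => (tkernel S nu (tcol t) * \1_E t)%:E)).

Definition has_SUT_law (d0 : measure_display) (T : measurableType d0)
    (P : probability T R) (p q : nat) (Y : T -> p.-tuple R)
    (xi : 'cV[R]_p) (Omega : 'M[R]_p) (Delta : 'M[R]_(p, q)) (tau : 'cV[R]_q)
    (Gammab : 'M[R]_q) (nu : R) : Prop :=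
  forall A : set (p.-tuple R), measurable A ->
    P (Y @^-1` A) = (SUT_law xi Omega Delta tau Gammab nu A)%:E.

Definition condprob (d0 : measure_display) (T : measurableType d0)
    (P : probability T R) (E F : set T) : R :=
  fine (P (E `&` F)) / fine (P F).

End SUT.

(* Main.v *)
Require Import Defs.
From HB Require Import structures.
From mathcomp Require Import all_boot all_order all_algebra.
From mathcomp Require Import all_classical all_reals all_analysis.
From mathcomp Require Import ring lra.

Import Order.TTheory GRing.Theory Num.Theory.
Local Open Scope ring_scope.
Local Open Scope classical_set_scope.
Section Helpers.
Variable R : realType.
Set Implicit Arguments.

Lemma invmx_diag n (d : 'rV[R]_n) : (forall i, d 0 i != 0) ->
  invmx (diag_mx d) = diag_mx (\row_i (d 0 i)^-1).
Proof.
move=> dn0.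
have H1 : diag_mx d *m diag_mx (\row_i (d 0 i)^-1) = 1%:M.
  apply/matrixP => i j; rewrite mul_diag_mx !mxE.
  by case: eqP => [->|_]; rewrite ?mulr1n ?mulr0n ?mulr0 // mulfV.
have U : diag_mx d \in unitmx.
  by apply: (intro_unitmx (B := diag_mx (\row_i (d 0 i)^-1))); split => //; apply: mulmx1C.
by rewrite -[RHS](mulKmx U) H1 mulmx1.
Qed.

Lemma corr_entry n1 n2 (A : 'M[R]_n1) (A' : 'M[R]_n2) (B : 'M[R]_(n1, n2)) i j :
  (forall i, 0 < A i i) -> (forall j, 0 < A' j j) ->
  (invmx (dsqrt A) *m B *m invmx (dsqrt A')) i j
    = B i j / (Num.sqrt (A i i) * Num.sqrt (A' j j)).
Proof.
move=> hA hA'; rewrite /dsqrt !invmx_diag; last 2 first.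
- by move=> k; rewrite mxE sqrtr_eq0 -ltNge hA'.
- by move=> k; rewrite mxE sqrtr_eq0 -ltNge hA.
rewrite mul_diag_mx mul_mx_diag !mxE invfM; ring.
Qed.

Lemma posdef_diag n (A : 'M[R]_n) i : posdef A -> 0 < A i i.
Proof.
case=> _ /(_ (delta_mx i 0)).
have -> : (delta_mx i 0 : 'cV[R]_n)^T *m A *m delta_mx i 0 = col i (row i A).
  by rewrite trmx_delta -rowE -colE.
rewrite !mxE; apply.
by apply/eqP => /matrixP/(_ i 0); rewrite !mxE !eqxx /= => /eqP; rewrite oner_eq0.
Qed.

Lemma tkernel_cast n n' (e : n = n') (M : 'M[R]_n) nu (x : 'cV[R]_n) :
  tkernel (castmx (e, e) M) nu (castmx (e, erefl) x) = tkernel M nu x.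
Proof. by case: n' / e; rewrite !castmx_id. Qed.

Lemma tcol_cast n n' (e : n = n') (t : n.-tuple R) :
  tcol (tcast e t) = castmx (e, erefl) (tcol t).
Proof. by case: n' / e; rewrite tcast_id castmx_id. Qed.

Lemma lebint_cast n n' (e : n = n') (f : n.-tuple R -> \bar R) :
  lebint f = lebint (fun t : n'.-tuple R => f (tcast (esym e) t)).
Proof. by case: n' / e; congr lebint; apply: funext => t; rewrite tcast_id. Qed.

Lemma split_all a b (Q : 'I_(a + b) -> Prop) :
  (forall i, Q i) <-> (forall i, Q (lshift b i)) /\ (forall j, Q (rshift a j)).
Proof.
split=> [h|[h1 h2] i]; first by split=> ?; apply: h.
by case: (split_ordP i) => k ->.
Qed.

Lemma alg4 (a b c b' c' : R) : a != 0 -> b = b' -> c = c' -> (b / a) / (c / a) = b' / c'.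
Proof.
move=> a0 <- <-; by rewrite invfM invrK [_^-1 * a]mulrC mulrA divfK.
Qed.

Lemma pos_equiv (s x y : R) : 0 < s -> (0 < x + s * y) = (0 < y + s^-1 * x).
Proof.
move=> s0; have -> : y + s^-1 * x = s^-1 * (x + s * y).
  by rewrite mulrDr mulrA mulVf ?gt_eqF // mul1r addrC.
by rewrite pmulr_rgt0 // invr_gt0.
Qed.

End Helpers.
Theorem proposition10 (R : realType) (d0 : measure_display) (T : measurableType d0)
    (P : probability T R) (d1 d2 m : nat)
    (Y : T -> (d1 + d2).-tuple R)
    (xi : 'cV[R]_(d1 + d2)) (Omega : 'M[R]_(d1 + d2))
    (Delta : 'M[R]_(d1 + d2, m)) (tau : 'cV[R]_m) (Gammab : 'M[R]_m) (nu : R) :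
  (0 < d1)%N -> (0 < d2)%N -> (0 < m)%N ->
  posdef Omega -> correlation Gammab -> 0 < nu ->
  posdef (block_mx Gammab Delta^T Delta (corrmx Omega)) ->
  measurable_fun setT Y ->
  has_SUT_law P Y xi Omega Delta tau Gammab nu ->
  let Y1 w := [tuple tnth (Y w) (lshift d2 i) | i < d1] in
  let Y2 w := [tuple tnth (Y w) (rshift d1 j) | j < d2] in
  let Omega11 := ulsubmx Omega in
  let Omega21 := dlsubmx Omega in
  let Omega22 := drsubmx Omega in
  let omega1 := dsqrt Omega11 in
  let omega2 := dsqrt Omega22 in
  let Omegab11 := invmx omega1 *m Omega11 *m invmx omega1 in
  let Omegab21 := invmx omega2 *m Omega21 *m invmx omega1 in
  let Delta1 : 'M[R]_(d1, m) := usubmx Delta in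
  let Delta2 : 'M[R]_(d2, m) := dsubmx Delta in
  let Delta21 : 'M[R]_(d2, m + d1) := row_mx Delta2 Omegab21 in
  let Gammab21 : 'M[R]_(m + d1) := block_mx Gammab Delta1^T Delta1 Omegab11 in
  let tau21 : 'cV[R]_(m + d1) := col_mx tau (invmx omega1 *m usubmx xi) in
  forall B : set (d2.-tuple R), measurable B ->
    condprob P (Y2 @^-1` B) [set w | forall i, 0 < tnth (Y1 w) i] =
    SUT_law (dsubmx xi) Omega22 Delta21 tau21 Gammab21 nu B.
Proof.
move=> hd1 hd2 hm hO hG hnu hS mY hY Y1 Y2 Omega11 Omega21 Omega22 omega1 omega2
  Omegab11 Omegab21 Delta1 Delta2 Delta21 Gammab21 tau21 B mB.
pose g1 (y : (d1 + d2).-tuple R) := [tuple tnth y (lshift d2 i) | i < d1].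
pose g2 (y : (d1 + d2).-tuple R) := [tuple tnth y (rshift d1 j) | j < d2].
pose A1 := [set y : (d1 + d2).-tuple R | forall i, 0 < tnth (g1 y) i].
pose AB := [set y : (d1 + d2).-tuple R | B (g2 y) /\ A1 y].
have mA1 : measurable A1.
  have -> : A1 = \bigcap_(i in [set: 'I_d1])
      ((@tnth _ R ^~ (lshift d2 i)) @^-1` `]0, +oo[%classic).
    apply/seteqP; split => y /=.
      by move=> h i _; rewrite /= in_itv /= andbT; move: (h i); rewrite tnth_mktuple.
    by move=> h i; rewrite tnth_mktuple; move: (h i I); rewrite /= in_itv /= andbT.
  apply: fin_bigcap_measurable; first exact: finite_finset.
  move=> i _; rewrite -[X in measurable X]setTI.
  by apply: measurable_tnth => //; exact: measurable_itv.
have mAB : measurable AB.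
  have mg2 : measurable_fun setT g2.
    apply/measurable_fun_tnthP => j.
    have -> : (@tnth _ R ^~ j \o g2) = @tnth _ R ^~ (rshift d1 j).
      by apply: funext => y /=; rewrite tnth_mktuple.
    exact: measurable_tnth.
  have -> : AB = g2 @^-1` B `&` A1 by [].
  apply: measurableI => //; rewrite -[X in measurable X]setTI; exact: mg2.
have Opos : forall i, 0 < Omega i i := fun i => posdef_diag i hO.
have Osym : forall i j, Omega i j = Omega j i.
  by move=> i j; rewrite -[in LHS](proj1 hO) mxE.
have hOb11 : forall i j, Omegab11 i j = Omega (lshift d2 i) (lshift d2 j) /
   (Num.sqrt (Omega (lshift d2 i) (lshift d2 i)) * Num.sqrt (Omega (lshift d2 j) (lshift d2 j))).
  by move=> i j; rewrite /Omegab11 /omega1 corr_entry => [|k|k]; rewrite ?mxE ?Opos.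
have hOb21 : forall i j, Omegab21 i j = Omega (rshift d1 i) (lshift d2 j) /
   (Num.sqrt (Omega (rshift d1 i) (rshift d1 i)) * Num.sqrt (Omega (lshift d2 j) (lshift d2 j))).
  by move=> i j; rewrite /Omegab21 /omega1 /omega2 corr_entry => [|k|k]; rewrite ?mxE ?Opos.
have hC22 : forall i j, corrmx Omega22 i j = Omega (rshift d1 i) (rshift d1 j) /
   (Num.sqrt (Omega (rshift d1 i) (rshift d1 i)) * Num.sqrt (Omega (rshift d1 j) (rshift d1 j))).
  by move=> i j; rewrite /corrmx corr_entry => [|k|k]; rewrite ?mxE ?Opos.
have hC : forall i j, corrmx Omega i j = Omega i j / (Num.sqrt (Omega i i) * Num.sqrt (Omega j j)).
  by move=> i j; rewrite /corrmx corr_entry.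
have htauL : forall i, tau21 (lshift d1 i) 0 = tau i 0 by move=> i; rewrite /tau21 col_mxEu.
have htauR : forall i, tau21 (rshift m i) 0 =
    (Num.sqrt (Omega (lshift d2 i) (lshift d2 i)))^-1 * xi (lshift d2 i) 0.
  move=> i; rewrite /tau21 col_mxEd /omega1 /dsqrt invmx_diag.
    by rewrite mul_diag_mx !mxE.
  by move=> k; rewrite !mxE sqrtr_eq0 -ltNge.
have hSS : block_mx Gammab Delta^T Delta (corrmx Omega) =
    castmx (esym (addnA m d1 d2), esym (addnA m d1 d2))
      (block_mx Gammab21 Delta21^T Delta21 (corrmx Omega22)).
  have hCb : corrmx Omega = block_mx Omegab11 Omegab21^T Omegab21 (corrmx Omega22).
    move: hC hC22; move: (corrmx Omega) (corrmx Omega22) => C C22 hC hC22.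
    clearbody Omegab11 Omegab21.
    rewrite -[LHS]submxK; congr block_mx; apply/matrixP => i j; rewrite !mxE.
    - by rewrite hC hOb11.
    - by rewrite hC hOb21 (Osym (lshift _ _)) [_ * Num.sqrt _]mulrC.
    - by rewrite hC hOb21.
    - by rewrite hC hC22.
  have hD : Delta = col_mx Delta1 Delta2 by rewrite /Delta1 /Delta2 vsubmxK.
  rewrite hCb hD tr_col_mx block_mxA /Gammab21 /Delta21 tr_row_mx.
  by [].
clearbody tau21.
rewrite /condprob.
have -> : Y2 @^-1` B `&` [set w | forall i, 0 < tnth (Y1 w) i] = Y @^-1` AB by [].
have -> : [set w | forall i, 0 < tnth (Y1 w) i] = Y @^-1` A1 by [].
have h1 := hY setT measurableT.
rewrite preimage_setT probability_setT in h1.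
rewrite !hY //= /SUT_law.
rewrite /SUT_law in h1.
apply: alg4.
  apply/eqP => a0; move: h1; rewrite a0 invr0 mulr0 => /eqP; rewrite eqe oner_eq0 //.
all: congr fine; rewrite (@lebint_cast R _ _ (addnA m d1 d2)); congr lebint; apply: funext => t /=.
all: rewrite tcol_cast hSS tkernel_cast; congr (_ * _)%:E.
all: rewrite /indic; congr (_%:R); congr (nat_of_bool _).
all: set tt := tcast (esym (addnA m d1 d2)) t.
all: have hT0 : forall i : 'I_m, (usubmx (tcol tt) + tau) i 0 =
        tnth t (lshift d2 (lshift d1 i)) + tau i 0 by
      move=> i; rewrite !mxE tcastE esymK; congr (tnth t _ + _); apply: val_inj.
all: have hT0' : forall i : 'I_m, (usubmx (tcol t) + tau21) (lshift d1 i) 0 =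
        tnth t (lshift d2 (lshift d1 i)) + tau i 0 by
      move=> i; rewrite !mxE htauL.
all: have hT1 : forall i : 'I_d1,
      tnth (g1 (coltup (xi + dsqrt Omega *m dsubmx (tcol tt)))) i =
      xi (lshift d2 i) 0 + Num.sqrt (Omega (lshift d2 i) (lshift d2 i)) *
        tnth t (lshift d2 (rshift m i)) by
      move=> i; rewrite /g1 !tnth_mktuple /dsqrt mul_diag_mx !mxE tcastE esymK;
      congr (_ + _ * tnth t _); apply: val_inj.
all: have hT1' : forall i : 'I_d1, (usubmx (tcol t) + tau21) (rshift m i) 0 =
      tnth t (lshift d2 (rshift m i)) +
      (Num.sqrt (Omega (lshift d2 i) (lshift d2 i)))^-1 * xi (lshift d2 i) 0 by
      move=> i; rewrite !mxE htauR.
- have hT2 : g2 (coltup (xi + dsqrt Omega *m dsubmx (tcol tt))) =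
      coltup (dsubmx xi + dsqrt Omega22 *m dsubmx (tcol t)).
    apply: eq_from_tnth => j; rewrite /g2 !tnth_mktuple /dsqrt !mul_diag_mx !mxE tcastE esymK.
    by congr (_ + _ * tnth t _); apply: val_inj; rewrite /= addnA.
  apply/idP/idP; rewrite !in_setE /=.
  + move=> [h0 [hB hA]]; split; last by rewrite -hT2.
    apply/split_all; split=> i.
      by rewrite hT0' -hT0; exact: h0.
    rewrite hT1' -pos_equiv ?sqrtr_gt0 ?Opos // -hT1; exact: hA.
  + move=> [/split_all [h0 hh1] hB]; split.
      by move=> i; rewrite hT0 -hT0'; exact: h0.
    split; first by rewrite hT2.
    move=> i; rewrite hT1 pos_equiv ?sqrtr_gt0 ?Opos // -hT1'; exact: hh1.
- apply/idP/idP; rewrite !in_setE /=.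
  + move=> [h0 hA].
    apply/split_all; split=> i.
      by rewrite hT0' -hT0; exact: h0.
    rewrite hT1' -pos_equiv ?sqrtr_gt0 ?Opos // -hT1; exact: hA.
  + move=> /split_all [h0 hh1]; split.
      by move=> i; rewrite hT0 -hT0'; exact: h0.
    move=> i; rewrite hT1 pos_equiv ?sqrtr_gt0 ?Opos // -hT1'; exact: hh1.
Qed.
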